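(* Let $k\ge1$ and $B>0$ be constants and let $F:[0,1]^2\to[0,1]^2$ be as defined below. 1. If $B<2$, then $(1/2,1/2)$ is the unique fixed point of $F$, and it is Jacobian attractive. 2. If $B>2$, then the system $\exp(B\sqrt k(1-2\alpha_R))=\frac{1-\alpha_L}{\alpha_L}$, $\exp(\frac{B}{\sqrt k}(1-2\alpha_L))=\frac{1-\alpha_R}{\alpha_R}$ has exactly one solution $(\alpha_L^*,\alpha_R^* )$ with $\alpha_L^*,\alpha_R^*\in(1/2,1)$; this point is the unique fixed point of $F$, and it is Jacobian attractive.
   Context: The map $F$: for $(\alpha_L,\alpha_R)\in[0,1]^2$, if $\sqrt{\alpha_L\alpha_R}\,B\le1$ set $(\theta_L,\theta_R)=(0,0)$; otherwise let $(\theta_L,\theta_R)$ be the unique solution with $\theta_L,\theta_R>0$ of $\exp(-B\sqrt k\,\alpha_R\theta_R)=1-\theta_L$ and $\exp(-\frac{B}{\sqrt k}\alpha_L\theta_L)=1-\theta_R$. Then $F(\alpha_L,\alpha_R)=\big(\tfrac12(1+\theta_L\alpha_L),\tfrac12(1+\theta_R\alpha_R)\big)$. A fixed point is Jacobian attractive if $F$ is differentiable there and all eigenvalues of its Jacobian matrix have absolute value strictly less than $1$. *)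

(* Defs.v *)
From Stdlib Require Import Reals ClassicalEpsilon.
Open Scope R_scope.

Definition theta_system (B k aL aR tL tR : R) : Prop :=
  0 < tL /\ 0 < tR /\
  exp (- (B * sqrt k * aR * tR)) = 1 - tL /\
  exp (- (B / sqrt k * aL * tL)) = 1 - tR.

(* (theta_L, theta_R): (0,0) if sqrt(aL aR) B <= 1, otherwise "the unique"
   positive solution of the system (selected by Hilbert's epsilon; when the
   solution exists and is unique, as asserted in the paper, this is it). *)
Definition theta (B k aL aR : R) : R * R :=
  match Rle_dec (sqrt (aL * aR) * B) 1 with
  | left _ => (0, 0)
  | right _ =>
      epsilon (inhabits (0, 0))
        (fun p : R * R => theta_system B k aL aR (fst p) (snd p))
  end.

Definition F (B k : R) (a : R * R) : R * R :=
  let aL := fst a in let aR := snd a in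
  let t := theta B k aL aR in
  ((1 + fst t * aL) / 2, (1 + snd t * aR) / 2).

Definition in_unit_square (a : R * R) : Prop :=
  0 <= fst a <= 1 /\ 0 <= snd a <= 1.

Definition is_fixed_point (B k : R) (a : R * R) : Prop :=
  in_unit_square a /\ F B k a = a.

Record mat2 := Mat2 { m11 : R; m12 : R; m21 : R; m22 : R }.

Definition norm2 (x y : R) : R := sqrt (x * x + y * y).

Definition has_jacobian (G : R * R -> R * R) (p : R * R) (J : mat2) : Prop :=
  forall eps, 0 < eps -> exists delta, 0 < delta /\
    forall h1 h2, norm2 h1 h2 < delta ->
      let q := G (fst p + h1, snd p + h2) in
      let g := G p in
      norm2 (fst q - fst g - (m11 J * h1 + m12 J * h2))
            (snd q - snd g - (m21 J * h1 + m22 J * h2))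
      <= eps * norm2 h1 h2.

(* lambda = a + i b is a (complex) eigenvalue of the real matrix J:
   there is a nonzero v = (v1r + i v1i, v2r + i v2i) in C^2 with J v = lambda v. *)
Definition is_eigenvalue (J : mat2) (a b : R) : Prop :=
  exists v1r v1i v2r v2i : R,
    (v1r <> 0 \/ v1i <> 0 \/ v2r <> 0 \/ v2i <> 0) /\
    m11 J * v1r + m12 J * v2r = a * v1r - b * v1i /\
    m11 J * v1i + m12 J * v2i = a * v1i + b * v1r /\
    m21 J * v1r + m22 J * v2r = a * v2r - b * v2i /\
    m21 J * v1i + m22 J * v2i = a * v2i + b * v2r.

Definition jacobian_attractive (B k : R) (p : R * R) : Prop :=
  is_fixed_point B k p /\
  exists J, has_jacobian (F B k) p J /\
    forall a b, is_eigenvalue J a b -> sqrt (a * a + b * b) < 1.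

Definition alpha_system (B k aL aR : R) : Prop :=
  exp (B * sqrt k * (1 - 2 * aR)) = (1 - aL) / aL /\
  exp (B / sqrt k * (1 - 2 * aL)) = (1 - aR) / aR.

(* Main.v *)
Require Import Defs.
From Stdlib Require Import Reals Lra Psatz ClassicalEpsilon.
From Coquelicot Require Import Coquelicot.
Open Scope R_scope.

Definition L (y : R) : R := 1 - exp (- y).

Lemma exp_gt (x : R) : x <> 0 -> 1 + x < exp x.
Proof. apply exp_ineq1. Qed.

Lemma L_lt (y : R) : 0 < y -> L y < y.
Proof. intros. unfold L. assert (H1 := exp_gt (-y)). lra. Qed.

Lemma L_pos (y : R) : 0 < y -> 0 < L y.
Proof. intros. unfold L. assert (exp (-y) < exp 0) by (apply exp_increasing; lra).
  rewrite exp_0 in H0. lra. Qed.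

Lemma L_lt1 (y : R) : L y < 1.
Proof. unfold L. assert (H := exp_pos (-y)). lra. Qed.

Lemma L_incr (x y : R) : x < y -> L x < L y.
Proof. intros. unfold L. assert (exp (-y) < exp (-x)) by (apply exp_increasing; lra). lra. Qed.

Lemma L_le1 (y : R) : 0 <= y -> y <= (1 + y) * L y.
Proof. intros. unfold L.
  assert (H1 := exp_ineq1_le y).
  assert (exp y * exp (- y) = 1) by (rewrite <- exp_plus; replace (y + - y) with 0 by ring; apply exp_0).
  assert (H3 := exp_pos (-y)). nra. Qed.

Lemma L_lip (x y : R) : 0 <= x -> 0 <= y -> Rabs (L x - L y) <= Rabs (x - y).
Proof.
  intros Hx Hy. unfold L.
  assert (key : forall a b, 0 <= a <= b -> exp (- a) - exp (- b) <= b - a).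
  { intros a b [Ha Hab].
    assert (exp (-b) = exp (-a) * exp (-(b - a))) by (rewrite <- exp_plus; f_equal; ring).
    assert (H1 := exp_gt (-(b-a))).
    destruct (Req_dec (b - a) 0) as [E|E].
    - replace b with a by lra. lra.
    - assert (H2 : 1 + - (b - a) < exp (- (b - a))) by (apply H1; lra).
      assert (exp (-a) <= 1).
      { destruct (Req_dec a 0). subst. rewrite Ropp_0, exp_0. lra.
        left. rewrite <- exp_0. apply exp_increasing. lra. }
      assert (H4 := exp_pos (-a)). nra. }
  destruct (Rle_dec x y).
  - rewrite Rabs_left1 by (assert (exp (-y) <= exp (-x)) by (destruct (Req_dec x y); [subst; lra| left; apply exp_increasing; lra]); lra).
    rewrite Rabs_left1 by lra. specialize (key x y). lra.
  - rewrite Rabs_right by (assert (exp (-x) < exp (-y)) by (apply exp_increasing; lra); lra).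
    rewrite Rabs_right by lra. specialize (key y x). lra.
Qed.

Lemma mvt_incr (f f' : R -> R) (a b : R) : a < b ->
  (forall x, a <= x <= b -> derivable_pt_lim f x (f' x)) ->
  (forall x, a < x < b -> 0 < f' x) -> f a < f b.
Proof.
  intros Hab Hd Hp. destruct (MVT_cor2 f f' a b Hab Hd) as [c [Hc1 Hc2]].
  specialize (Hp c Hc2). nra.
Qed.
Lemma expm_inv (z : R) : exp z * exp (- z) = 1.
Proof. rewrite <- exp_plus. replace (z + - z) with 0 by ring. apply exp_0. Qed.

Lemma phi_dec (x y : R) : 0 < x < y -> y * L x > x * L y.
Proof.
  intros [Hx Hxy].
  assert (H := mvt_incr (fun z => - ((1 - exp (- z)) / z))
     (fun z => ((1 - exp (-z)) - z * exp (- z)) / (z * z)) x y Hxy).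
  simpl in H.
  assert (Hlt : - ((1 - exp (- x)) / x) < - ((1 - exp (- y)) / y)).
  { apply H.
    - intros z Hz. apply is_derive_Reals. auto_derive.
      + lra.
      + field. lra.
    - intros z Hz. apply Rdiv_lt_0_compat; [|nra].
      assert (H1 := exp_gt z). assert (H2 := expm_inv z). assert (H3 := exp_pos (-z)).
      assert (z <> 0) by lra. specialize (H1 H0). nra. }
  unfold L.
  apply Ropp_lt_contravar in Hlt. rewrite !Ropp_involutive in Hlt.
  apply Rmult_lt_compat_l with (r := x * y) in Hlt; [|nra].
  replace (x * y * ((1 - exp (- y)) / y)) with (x * (1 - exp (- y))) in Hlt by (field; lra).
  replace (x * y * ((1 - exp (- x)) / x)) with (y * (1 - exp (- x))) in Hlt by (field; lra).
  lra.
Qed.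

Definition T (C D s : R) : R := L (C * L (D * s)).

Lemma T_ratio (C D x y : R) : 0 < C -> 0 < D -> 0 < x < y -> y * T C D x > x * T C D y.
Proof.
  intros HC HD [Hx Hxy]. unfold T.
  set (a := L (D * x)). set (b := L (D * y)).
  assert (Ha : 0 < a) by (apply L_pos; nra).
  assert (Hab : a < b) by (apply L_incr; nra).
  assert (H1 := phi_dec (C * a) (C * b) ltac:(split; nra)).
  assert (H2 := phi_dec (D * x) (D * y) ltac:(split; nra)). fold a b in H2.
  assert (H1' : b * L (C * a) > a * L (C * b)) by nra.
  assert (H2' : y * a > x * b) by nra.
  assert (P1 : 0 < L (C * b)) by (apply L_pos; nra).
  assert (P2 : 0 < L (C * a)) by (apply L_pos; nra).
  assert (H3 : (y * a) * (b * L (C * a)) > (x * b) * (a * L (C * b))).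
  { apply Rmult_gt_0_lt_compat; nra. }
  nra.
Qed.

Lemma T_sign_lo (C D s1 t : R) : 0 < C -> 0 < D -> 0 < s1 -> 0 < t ->
  t = T C D t -> T C D s1 > s1 -> s1 < t.
Proof.
  intros HC HD Hs Ht Et Hs1.
  destruct (Rlt_or_le s1 t) as [|Hle]; auto.
  destruct Hle as [Hlt|Heq].
  - assert (H := T_ratio C D t s1 HC HD (conj Ht Hlt)). nra.
  - subst. lra.
Qed.

Lemma T_sign_hi (C D s2 t : R) : 0 < C -> 0 < D -> 0 < s2 -> 0 < t ->
  t = T C D t -> T C D s2 < s2 -> t < s2.
Proof.
  intros HC HD Hs Ht Et Hs2.
  destruct (Rlt_or_le t s2) as [|Hle]; auto.
  destruct Hle as [Hlt|Heq].
  - assert (H := T_ratio C D s2 t HC HD (conj Hs Hlt)). nra.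
  - subst. lra.
Qed.

Lemma T_unique (C D t t' : R) : 0 < C -> 0 < D -> 0 < t -> 0 < t' ->
  t = T C D t -> t' = T C D t' -> t = t'.
Proof.
  intros HC HD Ht Ht' E E'.
  destruct (Rtotal_order t t') as [H|[H|H]]; auto.
  - assert (HH := T_ratio C D t t' HC HD (conj Ht H)). nra.
  - assert (HH := T_ratio C D t' t HC HD (conj Ht' H)). nra.
Qed.

Lemma cont_of_deriv (f : R -> R) : (forall x, ex_derive f x) -> continuity f.
Proof. intros H x. apply derivable_continuous_pt. apply ex_derive_Reals_0. apply H. Qed.

Lemma T_exists (C D : R) : 0 < C -> 0 < D -> C * D > 1 ->
  exists t, 0 < t < 1 /\ t = T C D t.
Proof.
  intros HC HD HCD.
  set (dl := (C * D - 1) / (2 * (C * D + D))).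
  assert (Hdl : 0 < dl) by (unfold dl; apply Rdiv_lt_0_compat; nra).
  assert (Hdl2 : dl * (C * D + D) = (C * D - 1) / 2) by (unfold dl; field; nra).
  assert (Hdl1 : dl < 1/2) by nra.
  assert (Hlow : T C D dl > dl).
  { unfold T. set (a := L (D * dl)).
    assert (Ha : dl * D <= (1 + D * dl) * a) by (unfold a; assert (H := L_le1 (D * dl)); nra).
    assert (Ha0 : 0 < a) by (apply L_pos; nra).
    assert (Hb := L_le1 (C * a) ltac:(nra)).
    destruct (Rlt_or_le dl (L (C * a))) as [|Hc]; [lra|].
    exfalso.
    assert (C * a * (1 - dl) <= dl) by nra.
    assert (C * (1 - dl) * ((1 + D * dl) * a) >= C * (1 - dl) * (dl * D)).
    { apply Rmult_ge_compat_l; nra. }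
    assert ((1 + D * dl) * dl >= C * D * dl * (1 - dl)) by nra.
    nra. }
  destruct (IVT (fun x => x - T C D x) dl 1) as [z [Hz1 Hz2]].
  - apply cont_of_deriv. intros x. unfold T, L. auto_derive. auto.
  - lra.
  - lra.
  - assert (H := L_lt1 (C * L (D * 1))). unfold T. lra.
  - exists z. split; [split|]; try lra.
    assert (z <> 1). { intro E. subst z. assert (H := L_lt1 (C * L (D * 1))). unfold T in Hz2. lra. }
    lra.
Qed.

Lemma K1 (z : R) : 0 < z -> 2 * z * exp (- z) < 1 - exp (- z) * exp (- z).
Proof.
  intros Hz.
  assert (H := mvt_incr (fun z => 1 - exp (- z) * exp (- z) - 2 * z * exp (- z))
     (fun z => 2 * exp (- z) * (exp (- z) - 1 + z)) 0 z Hz).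
  simpl in H. rewrite Ropp_0, exp_0 in H.
  enough (0 < 1 - exp (- z) * exp (- z) - 2 * z * exp (- z)) by lra.
  replace 0 with (1 - 1 * 1 - 2 * 0 * 1) at 1 by ring. apply H.
  - intros x Hx. apply is_derive_Reals. auto_derive. auto. ring.
  - intros x Hx. assert (H1 := exp_ineq1 (- x) ltac:(lra)). assert (H2 := exp_pos (-x)). nra.
Qed.

Definition Th (z : R) : R := (1 - exp (- z)) / (1 + exp (- z)).

Lemma Th_lt_half (z : R) : 0 < z -> Th z < z / 2.
Proof.
  intros Hz. unfold Th.
  assert (H := mvt_incr (fun z => z * (1 + exp (- z)) - 2 * (1 - exp (- z)))
     (fun z => 1 - exp (- z) * (1 + z)) 0 z Hz).
  simpl in H. rewrite Ropp_0, exp_0 in H.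
  assert (0 < z * (1 + exp (- z)) - 2 * (1 - exp (- z))).
  { replace 0 with (0 * (1 + 1) - 2 * (1 - 1)) at 1 by ring. apply H.
    - intros x Hx. apply is_derive_Reals. auto_derive. auto. ring.
    - intros x Hx. assert (H1 := exp_ineq1 x ltac:(lra)). assert (H2 := expm_inv x).
      assert (H3 := exp_pos (-x)). nra. }
  assert (H4 := exp_pos (-z)).
  apply Rmult_lt_reg_r with (r := 1 + exp (- z)); [lra|].
  unfold Rdiv. rewrite Rmult_assoc, Rinv_l by lra. lra.
Qed.

Lemma Th_ratio (x y : R) : 0 < x < y -> y * Th x > x * Th y.
Proof.
  intros [Hx Hxy].
  assert (H := mvt_incr (fun z => - (Th z / z))
     (fun z => ((1 - exp (- z)) * (1 + exp (- z)) - 2 * z * exp (- z)) / ((1 + exp (- z)) * (1 + exp (- z)) * (z * z))) x y Hxy).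
  simpl in H.
  assert (Hlt : - (Th x / x) < - (Th y / y)).
  { apply H.
    - intros z Hz. apply is_derive_Reals. unfold Th. auto_derive.
      + assert (H1 := exp_pos (-z)). repeat split; lra.
      + assert (H1 := exp_pos (-z)). field. lra.
    - intros z Hz. assert (H1 := K1 z ltac:(lra)). assert (H2 := exp_pos (-z)).
      apply Rdiv_lt_0_compat; [nra|].
      apply Rmult_lt_0_compat; nra. }
  apply Ropp_lt_contravar in Hlt. rewrite !Ropp_involutive in Hlt.
  apply Rmult_lt_compat_l with (r := x * y) in Hlt; [|nra].
  replace (x * y * (Th y / y)) with (x * Th y) in Hlt by (field; lra).
  replace (x * y * (Th x / x)) with (y * Th x) in Hlt by (field; lra).
  lra.
Qed.

Lemma Th_incr (x y : R) : x < y -> Th x < Th y.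
Proof.
  intros H. unfold Th. assert (exp (- y) < exp (- x)) by (apply exp_increasing; lra).
  assert (H1 := exp_pos (-x)). assert (H2 := exp_pos (-y)).
  apply Rminus_gt_0_lt.
  replace ((1 - exp (- y)) / (1 + exp (- y)) - (1 - exp (- x)) / (1 + exp (- x)))
    with (2 * (exp (- x) - exp (- y)) / ((1 + exp (- y)) * (1 + exp (- x)))) by (field; lra).
  apply Rdiv_lt_0_compat; nra.
Qed.

Lemma Th_0 : Th 0 = 0.
Proof. unfold Th. rewrite Ropp_0, exp_0. field. Qed.

Lemma Th_pos (z : R) : 0 < z -> 0 < Th z.
Proof. intros. rewrite <- Th_0. apply Th_incr. auto. Qed.

Lemma Th_lt1 (z : R) : Th z < 1.
Proof. unfold Th. assert (H := exp_pos (-z)).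
  apply Rmult_lt_reg_r with (r := 1 + exp (- z)); [lra|].
  unfold Rdiv. rewrite Rmult_assoc, Rinv_l by lra. lra. Qed.

Lemma Th_lower (z : R) : 0 <= z -> z <= (2 + z) * Th z.
Proof.
  intros Hz. unfold Th. assert (H1 := exp_ineq1_le z). assert (H2 := expm_inv z).
  assert (H3 := exp_pos (-z)).
  replace ((2 + z) * ((1 - exp (- z)) / (1 + exp (- z)))) with
    ((2 + z) * (1 - exp (- z)) / (1 + exp (- z))) by (field; lra).
  apply Rmult_le_reg_r with (r := 1 + exp (- z)); [lra|].
  unfold Rdiv. rewrite Rmult_assoc, Rinv_l by lra. nra.
Qed.

Lemma Th_of_exp (z u : R) : 0 < u -> exp (- z) = (1 - u) / u -> Th z = 2 * u - 1.
Proof. intros Hu E. unfold Th. rewrite E. field. split; lra. Qed.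

Lemma sqrt_gt1 (x B : R) : 0 < x -> 0 < B -> B * B * x > 1 -> sqrt (x) * B > 1.
Proof.
  intros Hx HB H. assert (H1 := sqrt_sqrt x ltac:(lra)). assert (H2 := sqrt_pos x).
  assert (sqrt x * B * (sqrt x * B) > 1) by nra.
  assert (0 <= sqrt x * B) by (apply Rmult_le_pos; lra).
  destruct (Rlt_or_le 1 (sqrt x * B)) as [|Hc]; auto.
  assert (sqrt x * B * (sqrt x * B) <= 1 * 1) by (apply Rmult_le_compat; lra). lra.
Qed.

Lemma theta_sys_T (B k aL aR tL tR : R) : 0 < k ->
  theta_system B k aL aR tL tR ->
  0 < tL /\ 0 < tR /\ tR = L (B / sqrt k * aL * tL) /\
  tL = T (B * sqrt k * aR) (B / sqrt k * aL) tL.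
Proof.
  intros Hk (H1 & H2 & H3 & H4). unfold T, L.
  assert (E1 : tR = 1 - exp (- (B / sqrt k * aL * tL))) by lra.
  repeat split; auto.
  rewrite <- E1. replace (- (B * sqrt k * aR * tR)) with (- (B * sqrt k * aR * tR)) by ring. lra.
Qed.

Lemma theta_spec (B k aL aR : R) : 1 <= k -> 0 < B -> 0 < aL -> 0 < aR -> B * B * (aL * aR) > 1 ->
  theta_system B k aL aR (fst (theta B k aL aR)) (snd (theta B k aL aR)).
Proof.
  intros Hk HB HL HR H.
  assert (Hs : 0 < sqrt k) by (apply sqrt_lt_R0; lra).
  unfold theta. destruct (Rle_dec (sqrt (aL * aR) * B) 1) as [Hle|Hgt].
  - assert (Hg := sqrt_gt1 (aL * aR) B ltac:(nra) HB H). lra.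
  - apply (epsilon_spec (inhabits (0,0)) (fun p : R * R => theta_system B k aL aR (fst p) (snd p))).
    destruct (T_exists (B * sqrt k * aR) (B / sqrt k * aL)) as [t [Ht Et]].
    + apply Rmult_lt_0_compat; [nra|lra].
    + apply Rmult_lt_0_compat; [apply Rdiv_lt_0_compat|]; lra.
    + replace (B * sqrt k * aR * (B / sqrt k * aL)) with (B * B * (aL * aR)) by (field; lra). lra.
    + exists (t, L (B / sqrt k * aL * t)). simpl. unfold theta_system.
      assert (0 < B / sqrt k * aL * t) by (apply Rmult_lt_0_compat; [apply Rmult_lt_0_compat; [apply Rdiv_lt_0_compat|]|]; lra).
      assert (Hp := L_pos _ H0).
      repeat split; try lra.
      * unfold T in Et. unfold L at 1 in Et. lra.
      * unfold L. ring.
Qed.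

Lemma theta_eq (B k aL aR tL tR : R) : 1 <= k -> 0 < B -> 0 < aL -> 0 < aR -> B * B * (aL * aR) > 1 ->
  theta_system B k aL aR tL tR -> theta B k aL aR = (tL, tR).
Proof.
  intros Hk HB HL HR H Hs.
  assert (Hsk : 0 < sqrt k) by (apply sqrt_lt_R0; lra).
  assert (Hsp := theta_spec B k aL aR Hk HB HL HR H).
  destruct (theta B k aL aR) as [p q]. simpl in Hsp.
  apply theta_sys_T in Hsp; [|lra]. apply theta_sys_T in Hs; [|lra].
  destruct Hsp as (P1 & P2 & P3 & P4). destruct Hs as (S1 & S2 & S3 & S4).
  assert (p = tL).
  { apply (T_unique (B * sqrt k * aR) (B / sqrt k * aL)); auto.
    - apply Rmult_lt_0_compat; [nra|lra].
    - apply Rmult_lt_0_compat; [apply Rdiv_lt_0_compat|]; lra. }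
  subst p. rewrite P3, S3. reflexivity.
Qed.

Lemma F_sol (B k aL aR tL tR : R) : 1 <= k -> 0 < B -> 0 < aL -> 0 < aR -> B * B * (aL * aR) > 1 ->
  theta_system B k aL aR tL tR -> F B k (aL, aR) = ((1 + tL * aL) / 2, (1 + tR * aR) / 2).
Proof.
  intros. unfold F. simpl. rewrite (theta_eq B k aL aR tL tR); auto.
Qed.

Lemma F_low (B k aL aR : R) : sqrt (aL * aR) * B <= 1 -> F B k (aL, aR) = (1/2, 1/2).
Proof.
  intros H. unfold F, theta. simpl. destruct (Rle_dec (sqrt (aL * aR) * B) 1); [|lra].
  simpl. f_equal; field.
Qed.

Lemma fixed_alpha (B k aL aR : R) : 1 <= k -> 0 < B ->
  in_unit_square (aL, aR) -> F B k (aL, aR) = (aL, aR) -> ~ (sqrt (aL * aR) * B <= 1) ->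
  (1/2 < aL < 1 /\ 1/2 < aR < 1 /\ alpha_system B k aL aR).
Proof.
  intros Hk HB [[HL1 HL2] [HR1 HR2]] HF Hn. simpl in *.
  assert (Hsk : 0 < sqrt k) by (apply sqrt_lt_R0; lra).
  assert (Hp : 0 < aL * aR).
  { destruct (Rle_or_lt (aL * aR) 0) as [Hc|]; auto.
    exfalso. apply Hn. rewrite sqrt_neg_0 by auto. lra. }
  assert (HL : 0 < aL) by (destruct HL1; auto; subst; lra).
  assert (HR : 0 < aR) by (destruct HR1; auto; subst; lra).
  assert (HBB : B * B * (aL * aR) > 1).
  { assert (H1 := sqrt_sqrt (aL * aR) ltac:(lra)).
    assert (Hs := sqrt_pos (aL * aR)).
    assert (1 < sqrt (aL * aR) * B) by lra.
    assert (1 * 1 < sqrt (aL * aR) * B * (sqrt (aL * aR) * B)) by (apply Rmult_le_0_lt_compat; lra).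
    replace (B * B * (aL * aR)) with (sqrt (aL * aR) * B * (sqrt (aL * aR) * B)) by (rewrite <- H1 at 3; ring).
    lra. }
  assert (Hsys := theta_spec B k aL aR Hk HB HL HR HBB).
  destruct (theta B k aL aR) as [tL tR] eqn:Eth. simpl in Hsys.
  rewrite (F_sol B k aL aR tL tR Hk HB HL HR HBB Hsys) in HF.
  injection HF as E1 E2.
  destruct Hsys as (S1 & S2 & S3 & S4).
  assert (tL < 1) by (assert (Hq := exp_pos (- (B * sqrt k * aR * tR))); lra).
  assert (tR < 1) by (assert (Hq := exp_pos (- (B / sqrt k * aL * tL))); lra).
  assert (EL : tL * aL = 2 * aL - 1) by lra.
  assert (ER : tR * aR = 2 * aR - 1) by lra.
  assert (1/2 < aL) by nra. assert (1/2 < aR) by nra.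
  assert (aL < 1) by nra. assert (aR < 1) by nra.
  repeat split; try lra.
  - replace (B * sqrt k * (1 - 2 * aR)) with (- (B * sqrt k * aR * tR)).
    + rewrite S3. apply Rmult_eq_reg_r with (r := aL); [|lra].
      unfold Rdiv. rewrite Rmult_assoc, Rinv_l by lra. nra.
    + replace (B * sqrt k * aR * tR) with (B * sqrt k * (tR * aR)) by ring. rewrite ER. ring.
  - replace (B / sqrt k * (1 - 2 * aL)) with (- (B / sqrt k * aL * tL)).
    + rewrite S4. apply Rmult_eq_reg_r with (r := aR); [|lra].
      unfold Rdiv. rewrite Rmult_assoc, Rinv_l by lra. nra.
    + replace (B / sqrt k * aL * tL) with (B / sqrt k * (tL * aL)) by ring. rewrite EL. ring.
Qed.

Lemma alpha_theta (B k aL aR : R) : 1 <= k -> 0 < B ->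
  1/2 < aL < 1 -> 1/2 < aR < 1 -> alpha_system B k aL aR ->
  theta_system B k aL aR ((2 * aL - 1) / aL) ((2 * aR - 1) / aR).
Proof.
  intros Hk HB HL HR [A1 A2].
  assert (Hsk : 0 < sqrt k) by (apply sqrt_lt_R0; lra).
  repeat split.
  - apply Rdiv_lt_0_compat; lra.
  - apply Rdiv_lt_0_compat; lra.
  - replace (- (B * sqrt k * aR * ((2 * aR - 1) / aR))) with (B * sqrt k * (1 - 2 * aR)) by (field; lra).
    rewrite A1. field. lra.
  - replace (- (B / sqrt k * aL * ((2 * aL - 1) / aL))) with (B / sqrt k * (1 - 2 * aL)) by (field; split; lra).
    rewrite A2. field. lra.
Qed.

Lemma alpha_fixed (B k aL aR : R) : 1 <= k -> 0 < B -> B * B * (aL * aR) > 1 ->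
  1/2 < aL < 1 -> 1/2 < aR < 1 -> alpha_system B k aL aR ->
  is_fixed_point B k (aL, aR).
Proof.
  intros Hk HB HBB HL HR Ha. split.
  - split; simpl; lra.
  - rewrite (F_sol B k aL aR _ _ Hk HB ltac:(lra) ltac:(lra) HBB (alpha_theta B k aL aR Hk HB HL HR Ha)).
    f_equal; field; lra.
Qed.

Lemma alpha_Th (B k aL aR : R) : 1 <= k -> 0 < B ->
  1/2 < aL < 1 -> 1/2 < aR < 1 -> alpha_system B k aL aR ->
  2 * aL - 1 = Th (B * sqrt k * (2 * aR - 1)) /\ 2 * aR - 1 = Th (B / sqrt k * (2 * aL - 1)).
Proof.
  intros Hk HB HL HR [A1 A2]. split; symmetry; apply Th_of_exp; try lra.
  - rewrite <- A1. f_equal. ring.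
  - rewrite <- A2. f_equal. ring.
Qed.

Lemma Th_sys_unique (c d x1 y1 x2 y2 : R) : 0 < c -> 0 < d -> 0 < x1 -> 0 < y1 -> 0 < x2 -> 0 < y2 ->
  x1 = Th (c * y1) -> y1 = Th (d * x1) -> x2 = Th (c * y2) -> y2 = Th (d * x2) -> x1 = x2 /\ y1 = y2.
Proof.
  intros Hc Hd H1 H2 H3 H4 E1 E2 E3 E4.
  assert (main : forall x1 y1 x2 y2, 0 < x1 -> 0 < y1 -> 0 < x2 -> 0 < y2 ->
    x1 = Th (c * y1) -> y1 = Th (d * x1) -> x2 = Th (c * y2) -> y2 = Th (d * x2) -> ~ x1 < x2).
  { clear - Hc Hd. intros x1 y1 x2 y2 H1 H2 H3 H4 E1 E2 E3 E4 Hlt.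
    assert (y1 < y2) by (rewrite E2, E4; apply Th_incr; nra).
    assert (R1 := Th_ratio (c * y1) (c * y2) ltac:(split; nra)).
    assert (R2 := Th_ratio (d * x1) (d * x2) ltac:(split; nra)).
    rewrite <- E1, <- E3 in R1. rewrite <- E2, <- E4 in R2.
    assert (y2 * x1 > y1 * x2) by nra. assert (x2 * y1 > x1 * y2) by nra. lra. }
  assert (Hx : x1 = x2).
  { destruct (Rtotal_order x1 x2) as [H|[H|H]]; auto; exfalso.
    - exact (main x1 y1 x2 y2 H1 H2 H3 H4 E1 E2 E3 E4 H).
    - exact (main x2 y2 x1 y1 H3 H4 H1 H2 E3 E4 E1 E2 H). }
  split; auto. rewrite E2, E4, Hx. reflexivity.
Qed.

Lemma Th_sys_exists (c d : R) : 0 < c -> 0 < d -> c * d > 4 ->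
  exists x y, 0 < x < 1 /\ 0 < y < 1 /\ x = Th (c * y) /\ y = Th (d * x).
Proof.
  intros Hc Hd Hcd.
  set (dl := (c * d - 4) / (2 * (2 * d + c * d))).
  assert (Hdl : 0 < dl) by (unfold dl; apply Rdiv_lt_0_compat; nra).
  assert (Hdl2 : dl * (2 * d + c * d) = (c * d - 4) / 2) by (unfold dl; field; nra).
  assert (Hdl1 : dl < 1/2) by nra.
  assert (Hlow : Th (c * Th (d * dl)) > dl).
  { set (t := Th (d * dl)).
    assert (Ht : d * dl <= (2 + d * dl) * t) by (unfold t; apply Th_lower; nra).
    assert (Ht0 : 0 < t) by (apply Th_pos; nra).
    assert (Hb := Th_lower (c * t) ltac:(nra)).
    destruct (Rlt_or_le dl (Th (c * t))) as [|Hcc]; [lra|].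
    exfalso.
    assert (c * t * (1 - dl) <= 2 * dl) by nra.
    assert (c * (1 - dl) * ((2 + d * dl) * t) >= c * (1 - dl) * (d * dl)).
    { apply Rmult_ge_compat_l; nra. }
    assert ((2 + d * dl) * (2 * dl) >= c * d * dl * (1 - dl)) by nra.
    nra. }
  destruct (IVT (fun x => x - Th (c * Th (d * x))) dl 1) as [z [Hz1 Hz2]].
  - apply cont_of_deriv. intros x. unfold Th. auto_derive.
    assert (H1 := exp_pos (- (d * x))).
    assert (H2 := exp_pos (- (c * ((1 + - exp (- (d * x))) * / (1 + exp (- (d * x))))))).
    repeat split; lra.
  - lra.
  - lra.
  - assert (H := Th_lt1 (c * Th (d * 1))). lra.
  - simpl in Hz2. assert (z <> 1).
    { intro E. subst z. assert (H := Th_lt1 (c * Th (d * 1))). lra. }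
    exists z, (Th (d * z)). repeat split; try lra.
    + apply Th_pos. nra.
    + apply Th_lt1.
Qed.

Lemma Th_sys_none (c d x y : R) : 0 < c -> 0 < d -> c * d < 4 -> 0 < x -> 0 < y ->
  x = Th (c * y) -> y = Th (d * x) -> False.
Proof.
  intros Hc Hd Hcd Hx Hy E1 E2.
  assert (H1 := Th_lt_half (c * y) ltac:(nra)). assert (H2 := Th_lt_half (d * x) ltac:(nra)).
  rewrite <- E1 in H1. rewrite <- E2 in H2.
  assert (x * y < (c * y / 2) * (d * x / 2)) by (apply Rmult_le_0_lt_compat; lra).
  nra.
Qed.

Lemma Th_inv (z x : R) : Th z = x -> exp (- z) = (1 - x) / (1 + x).
Proof.
  intros E. unfold Th in E. assert (H := exp_pos (-z)).
  assert (E' : x * (1 + exp (- z)) = 1 - exp (- z)).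
  { rewrite <- E. field. lra. }
  assert (1 + x > 0) by nra.
  apply Rmult_eq_reg_r with (r := 1 + x); [|lra].
  unfold Rdiv. rewrite Rmult_assoc, Rinv_l by lra. nra.
Qed.

Ltac pos := repeat first [apply Rdiv_lt_0_compat | apply Rmult_lt_0_compat | apply Rmult_le_pos | apply Rinv_0_lt_compat]; try lra.

Lemma abs_le_iff (x a : R) : Rabs x <= a <-> - a <= x <= a.
Proof. split.
  - intros H. split. assert (H1 := Rabs_Ropp x). assert (H2 := Rle_abs (- x)). lra.
    assert (H2 := Rle_abs x). lra.
  - apply Rabs_le. Qed.

Lemma abs_lt_iff (x a : R) : Rabs x < a <-> - a < x < a.
Proof. split.
  - intros H. destruct (Rabs_def2 x a H). lra.
  - intros. apply Rabs_def1; lra. Qed.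

Lemma L_nonneg (y : R) : 0 <= y -> 0 <= L y.
Proof. intros [H|H]. apply Rlt_le, L_pos; auto. subst. unfold L. rewrite Ropp_0, exp_0. lra. Qed.

Lemma L_lip2 (x y : R) : 0 <= x -> 0 <= y -> - Rabs (x - y) <= L x - L y <= Rabs (x - y).
Proof. intros. apply abs_le_iff. apply L_lip; auto. Qed.

Lemma T_pert (c d u v u0 v0 s dl : R) : 0 < c -> 0 < d -> 0 < u -> 0 < v -> 0 < u0 -> 0 < v0 <= 1 ->
  0 <= s <= 2 -> - dl <= u - u0 <= dl -> - dl <= v - v0 <= dl ->
  - (c * (dl + 2 * d * dl)) <= T (c * v) (d * u) s - T (c * v0) (d * u0) s <= c * (dl + 2 * d * dl).
Proof.
  intros Hc Hd Hu Hv Hu0 Hv0 Hs Hdu Hdv. unfold T.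
  set (X := L (d * u * s)). set (X0 := L (d * u0 * s)).
  assert (HX : 0 <= X <= 1) by (unfold X; split; [apply L_nonneg; pos| apply Rlt_le, L_lt1]).
  assert (HX0 : 0 <= X0 <= 1) by (unfold X0; split; [apply L_nonneg; pos| apply Rlt_le, L_lt1]).
  assert (H1 := L_lip2 (d * u * s) (d * u0 * s) ltac:(pos) ltac:(pos)). fold X X0 in H1.
  assert (Habs1 : Rabs (d * u * s - d * u0 * s) <= 2 * d * dl).
  { apply abs_le_iff. replace (d * u * s - d * u0 * s) with (d * (s * (u - u0))) by ring.
    assert (-(2 * dl) <= s * (u - u0) <= 2 * dl) by (split; nra).
    split; nra. }
  assert (H2 := L_lip2 (c * v * X) (c * v0 * X0) ltac:(pos) ltac:(pos)).
  assert (Habs2 : Rabs (c * v * X - c * v0 * X0) <= c * (dl + 2 * d * dl)).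
  { apply abs_le_iff.
    replace (c * v * X - c * v0 * X0) with (c * ((v - v0) * X + v0 * (X - X0))) by ring.
    assert (-(dl) <= (v - v0) * X <= dl) by (split; nra).
    assert (-(2 * d * dl) <= v0 * (X - X0) <= 2 * d * dl) by (split; nra).
    split; nra. }
  lra.
Qed.

Definition sol (c d u v tL tR : R) : Prop :=
  0 < tL /\ 0 < tR /\ tL = L (c * v * tR) /\ tR = L (d * u * tL).

Lemma sol_T (c d u v tL tR : R) : sol c d u v tL tR -> tL = T (c * v) (d * u) tL.
Proof. intros (H1 & H2 & H3 & H4). unfold T. rewrite <- H4. exact H3. Qed.

Lemma cont_sol (c d u0 v0 s0 r0 : R) : 0 < c -> 0 < d -> 1/2 < u0 < 1 -> 1/2 < v0 < 1 ->
  sol c d u0 v0 s0 r0 ->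
  forall eta, 0 < eta -> exists dl, 0 < dl /\ forall h1 h2 tL tR,
    - dl <= h1 <= dl -> - dl <= h2 <= dl -> sol c d (u0 + h1) (v0 + h2) tL tR ->
    - eta < tL - s0 < eta /\ - eta < tR - r0 < eta.
Proof.
  intros Hc Hd Hu0 Hv0 Hs0 eta Heta.
  assert (Es0 := sol_T _ _ _ _ _ _ Hs0).
  destruct Hs0 as (Hs0p & Hr0p & Es0' & Er0).
  assert (Hs01 : s0 < 1) by (rewrite Es0'; apply L_lt1).
  set (e1 := Rmin (eta / (2 * (1 + d))) (s0 / 2)).
  assert (He1a : e1 <= eta / (2 * (1 + d))) by apply Rmin_l.
  assert (He1b : e1 <= s0 / 2) by apply Rmin_r.
  assert (He1p : 0 < e1) by (apply Rmin_glb_lt; [apply Rdiv_lt_0_compat; lra | lra]).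
  set (s1 := s0 - e1). set (s2 := s0 + e1).
  set (T0 := T (c * v0) (d * u0)).
  assert (HCD : 0 < c * v0 /\ 0 < d * u0) by (split; pos).
  assert (Ha : T0 s1 > s1).
  { assert (H := T_ratio (c * v0) (d * u0) s1 s0 ltac:(lra) ltac:(lra) ltac:(unfold s1; lra)).
    fold T0 in H, Es0. rewrite <- Es0 in H.
    assert (0 < s1) by (unfold s1; lra). nra. }
  assert (Hb : T0 s2 < s2).
  { assert (H := T_ratio (c * v0) (d * u0) s0 s2 ltac:(lra) ltac:(lra) ltac:(unfold s2; lra)).
    fold T0 in H, Es0. rewrite <- Es0 in H. nra. }
  set (g := Rmin (T0 s1 - s1) (s2 - T0 s2)).
  assert (Hg1 : g <= T0 s1 - s1) by apply Rmin_l.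
  assert (Hg2 : g <= s2 - T0 s2) by apply Rmin_r.
  assert (Hgp : 0 < g) by (apply Rmin_glb_lt; lra).
  set (K := c * (1 + 2 * d)).
  assert (HK : 0 < K) by (unfold K; pos).
  exists (Rmin (1/4) (Rmin (g / (2 * K)) (eta / (4 * (1 + d))))).
  assert (Hm1 := Rmin_l (1/4) (Rmin (g / (2 * K)) (eta / (4 * (1 + d))))).
  assert (Hm2 := Rmin_r (1/4) (Rmin (g / (2 * K)) (eta / (4 * (1 + d))))).
  assert (Hm3 := Rmin_l (g / (2 * K)) (eta / (4 * (1 + d)))).
  assert (Hm4 := Rmin_r (g / (2 * K)) (eta / (4 * (1 + d)))).
  set (dl := Rmin (1/4) (Rmin (g / (2 * K)) (eta / (4 * (1 + d))))) in *.
  split.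
  { unfold dl. apply Rmin_glb_lt; [lra|]. apply Rmin_glb_lt; apply Rdiv_lt_0_compat; lra. }
  intros h1 h2 tL tR Hh1 Hh2 Hsol.
  assert (HKd : K * dl <= g / 2).
  { assert (K * dl <= K * (g / (2 * K))) by (apply Rmult_le_compat_l; lra).
    replace (K * (g / (2 * K))) with (g / 2) in H by (field; lra). lra. }
  assert (Hd1 : d * dl <= eta / 4).
  { assert (d * dl <= d * (eta / (4 * (1 + d)))) by (apply Rmult_le_compat_l; lra).
    assert (d * (eta / (4 * (1 + d))) <= eta / 4).
    { unfold Rdiv. rewrite Rinv_mult. 
      assert (0 < / (1 + d)) by (apply Rinv_0_lt_compat; lra).
      assert (d * / (1 + d) <= 1).
      { apply Rmult_le_reg_r with (r := 1 + d); [lra|]. rewrite Rmult_assoc, Rinv_l by lra. lra. }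
      assert (0 < eta * / 4) by lra.
      nra. }
    lra. }
  assert (Hde1 : d * e1 <= eta / 2).
  { assert (d * e1 <= d * (eta / (2 * (1 + d)))) by (apply Rmult_le_compat_l; lra).
    assert (d * (eta / (2 * (1 + d))) <= eta / 2).
    { unfold Rdiv. rewrite Rinv_mult.
      assert (0 < / (1 + d)) by (apply Rinv_0_lt_compat; lra).
      assert (d * / (1 + d) <= 1).
      { apply Rmult_le_reg_r with (r := 1 + d); [lra|]. rewrite Rmult_assoc, Rinv_l by lra. lra. }
      assert (0 < eta * / 2) by lra.
      nra. }
    lra. }
  set (u := u0 + h1) in *. set (v := v0 + h2) in *.
  assert (Hu : 0 < u) by (unfold u; lra). assert (Hv : 0 < v) by (unfold v; lra).
  assert (EtL := sol_T _ _ _ _ _ _ Hsol).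
  destruct Hsol as (HtL & HtR & EtL' & EtR).
  assert (HCD' : 0 < c * v /\ 0 < d * u) by (split; pos).
  assert (P1 := T_pert c d u v u0 v0 s1 dl Hc Hd Hu Hv ltac:(lra) ltac:(lra) ltac:(unfold s1; lra)
     ltac:(unfold u; lra) ltac:(unfold v; lra)).
  assert (P2 := T_pert c d u v u0 v0 s2 dl Hc Hd Hu Hv ltac:(lra) ltac:(lra) ltac:(unfold s2; lra)
     ltac:(unfold u; lra) ltac:(unfold v; lra)).
  fold T0 in P1, P2.
  assert (HKe : c * (dl + 2 * d * dl) = K * dl) by (unfold K; ring).
  rewrite HKe in P1, P2.
  assert (L1 : s1 < tL).
  { apply (T_sign_lo (c * v) (d * u) s1 tL); try lra. unfold s1; lra. }
  assert (L2 : tL < s2).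
  { apply (T_sign_hi (c * v) (d * u) s2 tL); try lra. unfold s2; lra. }
  assert (HtL1 : tL < 1) by (rewrite EtL'; apply L_lt1).
  assert (He1eta : e1 < eta).
  { assert (Hx : eta / (2 * (1 + d)) * (2 * (1 + d)) = eta) by (field; lra).
    assert (0 < eta / (2 * (1 + d))) by (apply Rdiv_lt_0_compat; lra). nra. }
  split.
  - unfold s1, s2 in *. lra.
  - rewrite EtR, Er0.
    assert (H := L_lip2 (d * u * tL) (d * u0 * s0) ltac:(pos) ltac:(pos)).
    assert (Rabs (d * u * tL - d * u0 * s0) < eta).
    { apply abs_lt_iff.
      replace (d * u * tL - d * u0 * s0) with (d * (h1 * tL) + d * (u0 * (tL - s0))) by (unfold u; ring).
      assert (- dl <= h1 * tL <= dl) by (split; nra).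
      assert (- e1 <= u0 * (tL - s0) <= e1) by (unfold s1, s2 in *; split; nra).
      assert (- (d * dl) <= d * (h1 * tL) <= d * dl) by (split; nra).
      assert (- (d * e1) <= d * (u0 * (tL - s0)) <= d * e1) by (split; nra).
      lra. }
    lra.
Qed.

Lemma abs_mul_pos (k x : R) : 0 <= k -> Rabs (k * x) = k * Rabs x.
Proof. intros. rewrite Rabs_mult, Rabs_pos_eq; auto. Qed.

Lemma alg_bound (S al be s0 r0 h1 h2 dP dQ e1 e2 eta e1p eps : R) :
  0 < S -> 0 <= al -> 0 <= be -> 0 <= s0 <= 1 -> 0 <= r0 <= 1 -> 0 <= eta <= 1 -> 0 <= e1p -> 0 < eps ->
  S * dP = s0 * h1 + e1 + al * (r0 * h2 + e2) ->
  S * dQ = r0 * h2 + e2 + be * (s0 * h1 + e1) ->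
  Rabs e1 <= eta * (Rabs h1 + Rabs h2) + e1p * Rabs dQ ->
  Rabs e2 <= eta * (Rabs h1 + Rabs h2) + e1p * Rabs dP ->
  (1 + al + be) * e1p <= S / 2 ->
  2 * (1 + al + be) * eta <= eps * S / 2 ->
  8 * (1 + al + be) * (1 + al + be) * e1p <= eps * S * S / 2 ->
  Rabs (dP - (s0 * h1 + al * r0 * h2) / S) + Rabs (dQ - (be * s0 * h1 + r0 * h2) / S)
    <= eps * (Rabs h1 + Rabs h2).
Proof.
  intros HS Hal Hbe Hs0 Hr0 Heta He1p Heps EP EQ B1 B2 C1 C2 C3.
  set (M := 1 + al + be) in *. set (H := Rabs h1 + Rabs h2) in *.
  assert (Hh1 := Rabs_pos h1). assert (Hh2 := Rabs_pos h2).
  assert (Hx := Rabs_pos e1). assert (Hy := Rabs_pos e2).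
  assert (Ha := Rabs_pos dP). assert (Hb := Rabs_pos dQ).
  assert (TA : S * Rabs dP <= (1 + al) * H + Rabs e1 + al * Rabs e2).
  { replace (S * Rabs dP) with (Rabs (S * dP)) by (apply abs_mul_pos; lra).
    rewrite EP.
    replace (s0 * h1 + e1 + al * (r0 * h2 + e2)) with (s0 * h1 + e1 + ((al * r0) * h2 + al * e2)) by ring.
    eapply Rle_trans. apply Rabs_triang. eapply Rle_trans. apply Rplus_le_compat_l. apply Rabs_triang.
    eapply Rle_trans. apply Rplus_le_compat_r. apply Rabs_triang.
    rewrite !abs_mul_pos by nra.
    assert (s0 * Rabs h1 <= Rabs h1) by nra. assert (al * r0 * Rabs h2 <= al * Rabs h2) by (rewrite Rmult_assoc; apply Rmult_le_compat_l; nra).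
    unfold H. nra. }
  assert (TB : S * Rabs dQ <= (1 + be) * H + Rabs e2 + be * Rabs e1).
  { replace (S * Rabs dQ) with (Rabs (S * dQ)) by (apply abs_mul_pos; lra).
    rewrite EQ.
    replace (r0 * h2 + e2 + be * (s0 * h1 + e1)) with (r0 * h2 + e2 + ((be * s0) * h1 + be * e1)) by ring.
    eapply Rle_trans. apply Rabs_triang. eapply Rle_trans. apply Rplus_le_compat_l. apply Rabs_triang.
    eapply Rle_trans. apply Rplus_le_compat_r. apply Rabs_triang.
    rewrite !abs_mul_pos by nra.
    assert (r0 * Rabs h2 <= Rabs h2) by nra. assert (be * s0 * Rabs h1 <= be * Rabs h1) by (rewrite Rmult_assoc; apply Rmult_le_compat_l; nra).
    unfold H. nra. }
  assert (XY : Rabs e1 + Rabs e2 <= 2 * eta * H + e1p * (Rabs dP + Rabs dQ)) by lra.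
  assert (S1 : S * (Rabs dP + Rabs dQ) <= M * (2 * H + (Rabs e1 + Rabs e2))).
  { unfold M. assert (0 <= al * H) by (unfold H; pos). assert (0 <= be * H) by (unfold H; pos).
    assert (0 <= al * Rabs e1) by pos. assert (0 <= be * Rabs e2) by pos. lra. }
  assert (S2 : S * (Rabs dP + Rabs dQ) <= M * (2 * H + 2 * eta * H) + M * e1p * (Rabs dP + Rabs dQ)).
  { assert (0 <= M) by (unfold M; lra). nra. }
  assert (S3 : S * (Rabs dP + Rabs dQ) <= 8 * M * H).
  { assert (0 <= M) by (unfold M; lra). assert (0 <= H) by (unfold H; lra).
    assert (M * e1p * (Rabs dP + Rabs dQ) <= S / 2 * (Rabs dP + Rabs dQ)) by nra.
    assert (0 <= M * H * (1 - eta)) by (apply Rmult_le_pos; [pos|lra]).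
    assert (M * (2 * H + 2 * eta * H) <= 4 * M * H) by lra. lra. }
  assert (E1 : dP - (s0 * h1 + al * r0 * h2) / S = (e1 + al * e2) / S) by (apply Rmult_eq_reg_l with S; [|lra]; field_simplify; try lra; rewrite EP; field; lra).
  assert (E2 : dQ - (be * s0 * h1 + r0 * h2) / S = (e2 + be * e1) / S) by (apply Rmult_eq_reg_l with S; [|lra]; field_simplify; try lra; rewrite EQ; field; lra).
  rewrite E1, E2.
  unfold Rdiv. rewrite !Rabs_mult. rewrite (Rabs_pos_eq (/ S)) by (left; apply Rinv_0_lt_compat; lra).
  assert (F1 : Rabs (e1 + al * e2) <= Rabs e1 + al * Rabs e2).
  { eapply Rle_trans. apply Rabs_triang. rewrite abs_mul_pos by lra. lra. }
  assert (F2 : Rabs (e2 + be * e1) <= Rabs e2 + be * Rabs e1).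
  { eapply Rle_trans. apply Rabs_triang. rewrite abs_mul_pos by lra. lra. }
  assert (F3 : Rabs (e1 + al * e2) + Rabs (e2 + be * e1) <= M * (Rabs e1 + Rabs e2)).
  { unfold M. assert (0 <= al * Rabs e1) by pos. assert (0 <= be * Rabs e2) by pos. lra. }
  assert (F4 : S * (M * (Rabs e1 + Rabs e2)) <= eps * S * S * H).
  { assert (0 <= M) by (unfold M; lra). assert (0 <= H) by (unfold H; lra).
    assert (P1 : S * M * (Rabs e1 + Rabs e2) <= S * M * (2 * eta * H + e1p * (Rabs dP + Rabs dQ)))
      by (apply Rmult_le_compat_l; [pos|lra]).
    assert (P2 : M * e1p * (S * (Rabs dP + Rabs dQ)) <= M * e1p * (8 * M * H)) by (apply Rmult_le_compat_l; [pos|lra]).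
    assert (P3 : S * H * (2 * M * eta) <= S * H * (eps * S / 2)) by (apply Rmult_le_compat_l; [pos|lra]).
    assert (P4 : H * (8 * M * M * e1p) <= H * (eps * S * S / 2)) by (apply Rmult_le_compat_l; [pos|lra]).
    lra. }
  assert (G : M * (Rabs e1 + Rabs e2) <= eps * S * H).
  { apply Rmult_le_reg_l with S; [lra|]. lra. }
  assert (0 < / S) by (apply Rinv_0_lt_compat; lra).
  replace (Rabs (e1 + al * e2) * / S + Rabs (e2 + be * e1) * / S) with
    ((Rabs (e1 + al * e2) + Rabs (e2 + be * e1)) * / S) by ring.
  apply Rmult_le_reg_r with S; [lra|].
  rewrite Rmult_assoc, Rinv_l by lra. nra.
Qed.

Lemma exp_lin (w0 ep : R) : 0 < ep -> exists dl, 0 < dl /\ forall t, Rabs t < dl ->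
  Rabs (exp (w0 + t) - exp w0 - exp w0 * t) <= ep * Rabs t.
Proof.
  intros Hep. destruct (derivable_pt_lim_exp w0 ep Hep) as [dl Hdl].
  exists dl. split; [apply cond_pos|]. intros t Ht.
  destruct (Req_dec t 0) as [E|E].
  - subst. rewrite Rplus_0_r, Rabs_R0. replace (exp w0 - exp w0 - exp w0 * 0) with 0 by ring.
    rewrite Rabs_R0. lra.
  - specialize (Hdl t E Ht).
    replace (exp (w0 + t) - exp w0 - exp w0 * t) with (t * ((exp (w0 + t) - exp w0) / t - exp w0)) by (field; auto).
    rewrite Rabs_mult. rewrite Rmult_comm. apply Rmult_le_compat_r; [apply Rabs_pos| lra].
Qed.

Lemma deriv_sol (c d u0 v0 s0 r0 al be : R) : 0 < c -> 0 < d -> 1/2 < u0 < 1 -> 1/2 < v0 < 1 ->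
  sol c d u0 v0 s0 r0 -> al = c * u0 * (1 - s0) -> be = d * v0 * (1 - r0) -> 0 < 1 - al * be ->
  forall eps, 0 < eps -> exists dl, 0 < dl /\ forall h1 h2 tL tR,
    - dl <= h1 <= dl -> - dl <= h2 <= dl -> sol c d (u0 + h1) (v0 + h2) tL tR ->
    Rabs ((u0 + h1) * tL - u0 * s0 - (s0 * h1 + al * r0 * h2) / (1 - al * be)) +
    Rabs ((v0 + h2) * tR - v0 * r0 - (be * s0 * h1 + r0 * h2) / (1 - al * be))
      <= eps * (Rabs h1 + Rabs h2).
Proof.
  intros Hc Hd Hu0 Hv0 Hsol0 Hal Hbe HS eps Heps.
  assert (Hsol0' := Hsol0). destruct Hsol0' as (Hs0 & Hr0 & Es0 & Er0).
  assert (Hs01 : s0 < 1) by (rewrite Es0; apply L_lt1).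
  assert (Hr01 : r0 < 1) by (rewrite Er0; apply L_lt1).
  assert (Hal0 : 0 <= al) by (rewrite Hal; apply Rmult_le_pos; [pos|lra]).
  assert (Hbe0 : 0 <= be) by (rewrite Hbe; apply Rmult_le_pos; [pos|lra]).
  set (S := 1 - al * be) in *.
  set (M := 1 + al + be).
  assert (HM : 1 <= M) by (unfold M; lra).
  set (eta := Rmin 1 (eps * S / (4 * M))).
  assert (Heta1 : eta <= 1) by apply Rmin_l.
  assert (Heta2 : eta <= eps * S / (4 * M)) by apply Rmin_r.
  assert (Hetap : 0 < eta) by (apply Rmin_glb_lt; [lra| apply Rdiv_lt_0_compat; pos]).
  set (e1p := Rmin (S / (2 * M)) (eps * S * S / (16 * M * M))).
  assert (He1 : e1p <= S / (2 * M)) by apply Rmin_l.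
  assert (He2 : e1p <= eps * S * S / (16 * M * M)) by apply Rmin_r.
  assert (He1pp : 0 < e1p) by (apply Rmin_glb_lt; apply Rdiv_lt_0_compat; pos).
  assert (C1 : M * e1p <= S / 2).
  { assert (M * e1p <= M * (S / (2 * M))) by (apply Rmult_le_compat_l; lra).
    replace (M * (S / (2 * M))) with (S / 2) in H by (field; lra). lra. }
  assert (C2 : 2 * M * eta <= eps * S / 2).
  { assert (2 * M * eta <= 2 * M * (eps * S / (4 * M))) by (apply Rmult_le_compat_l; lra).
    replace (2 * M * (eps * S / (4 * M))) with (eps * S / 2) in H by (field; lra). lra. }
  assert (C3 : 8 * M * M * e1p <= eps * S * S / 2).
  { assert (8 * M * M * e1p <= 8 * M * M * (eps * S * S / (16 * M * M))) by (apply Rmult_le_compat_l; pos).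
    replace (8 * M * M * (eps * S * S / (16 * M * M))) with (eps * S * S / 2) in H by (field; lra). lra. }
  set (ep := e1p / (c + d)).
  assert (Hep : 0 < ep) by (unfold ep; apply Rdiv_lt_0_compat; lra).
  assert (Hepc : ep * c <= e1p /\ ep * d <= e1p).
  { unfold ep. split.
    - replace (e1p / (c + d) * c) with (e1p * (c / (c + d))) by (field; lra).
      assert (c / (c + d) <= 1) by (apply Rmult_le_reg_r with (c + d); [lra|]; unfold Rdiv; rewrite Rmult_assoc, Rinv_l by lra; lra).
      nra.
    - replace (e1p / (c + d) * d) with (e1p * (d / (c + d))) by (field; lra).
      assert (d / (c + d) <= 1) by (apply Rmult_le_reg_r with (c + d); [lra|]; unfold Rdiv; rewrite Rmult_assoc, Rinv_l by lra; lra).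
      nra. }
  set (w1 := - (c * v0 * r0)). set (w2 := - (d * u0 * s0)).
  destruct (exp_lin w1 ep Hep) as [d1 [Hd1 Hl1]].
  destruct (exp_lin w2 ep Hep) as [d2 [Hd2 Hl2]].
  set (etac := Rmin eta (Rmin (d1 / (4 * c)) (d2 / (4 * d)))).
  assert (Hc1 : etac <= eta) by apply Rmin_l.
  assert (Hc2 : etac <= d1 / (4 * c)) by (eapply Rle_trans; [apply Rmin_r| apply Rmin_l]).
  assert (Hc3 : etac <= d2 / (4 * d)) by (eapply Rle_trans; [apply Rmin_r| apply Rmin_r]).
  assert (Hcp : 0 < etac) by (apply Rmin_glb_lt; [lra| apply Rmin_glb_lt; apply Rdiv_lt_0_compat; lra]).
  destruct (cont_sol c d u0 v0 s0 r0 Hc Hd Hu0 Hv0 Hsol0 etac Hcp) as [dc [Hdc Hcont]].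
  set (dl := Rmin dc (Rmin (d1 / (4 * c)) (d2 / (4 * d)))).
  assert (Hdl1 : dl <= dc) by apply Rmin_l.
  assert (Hdl2 : dl <= d1 / (4 * c)) by (eapply Rle_trans; [apply Rmin_r| apply Rmin_l]).
  assert (Hdl3 : dl <= d2 / (4 * d)) by (eapply Rle_trans; [apply Rmin_r| apply Rmin_r]).
  exists dl. split.
  { apply Rmin_glb_lt; [lra| apply Rmin_glb_lt; apply Rdiv_lt_0_compat; lra]. }
  intros h1 h2 tL tR Hh1 Hh2 Hsol.
  destruct (Hcont h1 h2 tL tR ltac:(lra) ltac:(lra) Hsol) as [CL CR].
  destruct Hsol as (HtL & HtR & EtL & EtR).
  assert (HtL1 : tL < 1) by (rewrite EtL; apply L_lt1).
  assert (HtR1 : tR < 1) by (rewrite EtR; apply L_lt1).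
  set (dP := (u0 + h1) * tL - u0 * s0). set (dQ := (v0 + h2) * tR - v0 * r0).
  assert (BQ : Rabs dQ <= dl + etac).
  { apply abs_le_iff. unfold dQ.
    replace ((v0 + h2) * tR - v0 * r0) with (h2 * tR + v0 * (tR - r0)) by ring.
    split; nra. }
  assert (BP : Rabs dP <= dl + etac).
  { apply abs_le_iff. unfold dP.
    replace ((u0 + h1) * tL - u0 * s0) with (h1 * tL + u0 * (tL - s0)) by ring.
    split; nra. }
  set (t1 := - (c * dQ)). set (t2 := - (d * dP)).
  assert (Ht1 : Rabs t1 < d1).
  { unfold t1. rewrite Rabs_Ropp, abs_mul_pos by lra.
    assert (c * Rabs dQ <= c * (dl + etac)) by (apply Rmult_le_compat_l; lra).
    assert (c * dl <= d1 / 4).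
    { assert (c * dl <= c * (d1 / (4 * c))) by (apply Rmult_le_compat_l; lra).
      replace (c * (d1 / (4 * c))) with (d1 / 4) in H0 by (field; lra). lra. }
    assert (c * etac <= d1 / 4).
    { assert (c * etac <= c * (d1 / (4 * c))) by (apply Rmult_le_compat_l; lra).
      replace (c * (d1 / (4 * c))) with (d1 / 4) in H1 by (field; lra). lra. }
    lra. }
  assert (Ht2 : Rabs t2 < d2).
  { unfold t2. rewrite Rabs_Ropp, abs_mul_pos by lra.
    assert (d * Rabs dP <= d * (dl + etac)) by (apply Rmult_le_compat_l; lra).
    assert (d * dl <= d2 / 4).
    { assert (d * dl <= d * (d2 / (4 * d))) by (apply Rmult_le_compat_l; lra).
      replace (d * (d2 / (4 * d))) with (d2 / 4) in H0 by (field; lra). lra. }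
    assert (d * etac <= d2 / 4).
    { assert (d * etac <= d * (d2 / (4 * d))) by (apply Rmult_le_compat_l; lra).
      replace (d * (d2 / (4 * d))) with (d2 / 4) in H1 by (field; lra). lra. }
    lra. }
  specialize (Hl1 t1 Ht1). specialize (Hl2 t2 Ht2).
  set (rho1 := exp (w1 + t1) - exp w1 - exp w1 * t1) in *.
  set (rho2 := exp (w2 + t2) - exp w2 - exp w2 * t2) in *.
  assert (Ew1 : exp w1 = 1 - s0) by (unfold w1; rewrite Es0; unfold L; ring).
  assert (Ew2 : exp w2 = 1 - r0) by (unfold w2; rewrite Er0; unfold L; ring).
  assert (EX1 : w1 + t1 = - (c * (v0 + h2) * tR)) by (unfold w1, t1, dQ; ring).
  assert (EX2 : w2 + t2 = - (d * (u0 + h1) * tL)) by (unfold w2, t2, dP; ring).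
  assert (A1 : tL = s0 + (1 - s0) * c * dQ - rho1).
  { rewrite EtL at 1. unfold L. rewrite <- EX1.
    assert (exp (w1 + t1) = exp w1 + exp w1 * t1 + rho1) by (unfold rho1; ring).
    rewrite H, Ew1. unfold t1. ring. }
  assert (A2 : tR = r0 + (1 - r0) * d * dP - rho2).
  { rewrite EtR at 1. unfold L. rewrite <- EX2.
    assert (exp (w2 + t2) = exp w2 + exp w2 * t2 + rho2) by (unfold rho2; ring).
    rewrite H, Ew2. unfold t2. ring. }
  set (e1 := h1 * (tL - s0) - u0 * rho1).
  set (e2 := h2 * (tR - r0) - v0 * rho2).
  assert (D1 : dP = s0 * h1 + e1 + al * dQ).
  { unfold dP, e1. rewrite Hal.
    replace ((u0 + h1) * tL - u0 * s0) with (h1 * tL + u0 * (tL - s0)) by ring.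
    replace (u0 * (tL - s0)) with (u0 * ((1 - s0) * c * dQ - rho1)) by (rewrite A1 at 1; ring).
    ring. }
  assert (D2 : dQ = r0 * h2 + e2 + be * dP).
  { unfold dQ, e2. rewrite Hbe.
    replace ((v0 + h2) * tR - v0 * r0) with (h2 * tR + v0 * (tR - r0)) by ring.
    replace (v0 * (tR - r0)) with (v0 * ((1 - r0) * d * dP - rho2)) by (rewrite A2 at 1; ring).
    ring. }
  assert (EP : S * dP = s0 * h1 + e1 + al * (r0 * h2 + e2)).
  { assert (X : al * dQ = al * (r0 * h2 + e2 + be * dP)) by (f_equal; exact D2). unfold S. lra. }
  assert (EQ : S * dQ = r0 * h2 + e2 + be * (s0 * h1 + e1)).
  { assert (X : be * dP = be * (s0 * h1 + e1 + al * dQ)) by (f_equal; exact D1). unfold S. lra. }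
  assert (Hh1a := Rabs_pos h1). assert (Hh2a := Rabs_pos h2).
  assert (B1 : Rabs e1 <= eta * (Rabs h1 + Rabs h2) + e1p * Rabs dQ).
  { unfold e1. eapply Rle_trans. apply Rabs_triang. rewrite Rabs_Ropp, Rabs_mult, abs_mul_pos by lra.
    assert (Rabs (tL - s0) <= eta) by (apply abs_le_iff; lra).
    assert (Rabs h1 * Rabs (tL - s0) <= Rabs h1 * eta) by (apply Rmult_le_compat_l; lra).
    assert (Rabs t1 = c * Rabs dQ) by (unfold t1; rewrite Rabs_Ropp, abs_mul_pos by lra; ring).
    assert (u0 * Rabs rho1 <= ep * Rabs t1) by (assert (Hr := Rabs_pos rho1); nra).
    assert (ep * c * Rabs dQ <= e1p * Rabs dQ) by (apply Rmult_le_compat_r; [apply Rabs_pos|lra]).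
    nra. }
  assert (B2 : Rabs e2 <= eta * (Rabs h1 + Rabs h2) + e1p * Rabs dP).
  { unfold e2. eapply Rle_trans. apply Rabs_triang. rewrite Rabs_Ropp, Rabs_mult, abs_mul_pos by lra.
    assert (Rabs (tR - r0) <= eta) by (apply abs_le_iff; lra).
    assert (Rabs h2 * Rabs (tR - r0) <= Rabs h2 * eta) by (apply Rmult_le_compat_l; lra).
    assert (Rabs t2 = d * Rabs dP) by (unfold t2; rewrite Rabs_Ropp, abs_mul_pos by lra; ring).
    assert (v0 * Rabs rho2 <= ep * Rabs t2) by (assert (Hr := Rabs_pos rho2); nra).
    assert (ep * d * Rabs dP <= e1p * Rabs dP) by (apply Rmult_le_compat_r; [apply Rabs_pos|lra]).
    nra. }
  apply (alg_bound S al be s0 r0 h1 h2 dP dQ e1 e2 eta e1p eps); try lra; fold M; lra.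
Qed.

Lemma eig_real (J : mat2) (a b : R) : m12 J * m21 J > 0 -> is_eigenvalue J a b ->
  b = 0 /\ a * a - (m11 J + m22 J) * a + (m11 J * m22 J - m12 J * m21 J) = 0.
Proof.
  destruct J as [p q r s]. simpl. intros Hqr (v1r & v1i & v2r & v2i & Hnz & E1 & E2 & E3 & E4). simpl in *.
  set (R1 := p * v1r + q * v2r - a * v1r + b * v1i).
  set (I1 := p * v1i + q * v2i - a * v1i - b * v1r).
  set (R2 := r * v1r + s * v2r - a * v2r + b * v2i).
  set (I2 := r * v1i + s * v2i - a * v2i - b * v2r).
  assert (R1 = 0) by (unfold R1; lra). assert (I1 = 0) by (unfold I1; lra).
  assert (R2 = 0) by (unfold R2; lra). assert (I2 = 0) by (unfold I2; lra).
  set (Dr := (p - a) * (s - a) - b * b - q * r).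
  set (Di := - b * ((p - a) + (s - a))).
  assert (X1 : Dr * v1r - Di * v1i = (s - a) * R1 + b * I1 - q * R2) by (unfold Dr, Di, R1, I1, R2; ring).
  assert (X2 : Dr * v1i + Di * v1r = (s - a) * I1 - b * R1 - q * I2) by (unfold Dr, Di, R1, I1, I2; ring).
  assert (X3 : Dr * v2r - Di * v2i = - r * R1 + (p - a) * R2 + b * I2) by (unfold Dr, Di, R1, R2, I2; ring).
  assert (X4 : Dr * v2i + Di * v2r = - r * I1 + (p - a) * I2 - b * R2) by (unfold Dr, Di, I1, R2, I2; ring).
  rewrite H, H0, H1, H2 in *.
  assert (Y1 : (Dr * Dr + Di * Di) * v1r = 0).
  { replace ((Dr * Dr + Di * Di) * v1r) with (Dr * (Dr * v1r - Di * v1i) + Di * (Dr * v1i + Di * v1r)) by ring.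
    rewrite X1, X2. ring. }
  assert (Y2 : (Dr * Dr + Di * Di) * v1i = 0).
  { replace ((Dr * Dr + Di * Di) * v1i) with (Dr * (Dr * v1i + Di * v1r) - Di * (Dr * v1r - Di * v1i)) by ring.
    rewrite X1, X2. ring. }
  assert (Y3 : (Dr * Dr + Di * Di) * v2r = 0).
  { replace ((Dr * Dr + Di * Di) * v2r) with (Dr * (Dr * v2r - Di * v2i) + Di * (Dr * v2i + Di * v2r)) by ring.
    rewrite X3, X4. ring. }
  assert (Y4 : (Dr * Dr + Di * Di) * v2i = 0).
  { replace ((Dr * Dr + Di * Di) * v2i) with (Dr * (Dr * v2i + Di * v2r) - Di * (Dr * v2r - Di * v2i)) by ring.
    rewrite X3, X4. ring. }
  assert (Z : Dr * Dr + Di * Di = 0).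
  { destruct Hnz as [N|[N|[N|N]]].
    - apply (Rmult_eq_reg_r v1r); auto. lra.
    - apply (Rmult_eq_reg_r v1i); auto. lra.
    - apply (Rmult_eq_reg_r v2r); auto. lra.
    - apply (Rmult_eq_reg_r v2i); auto. lra. }
  assert (ZDr : Dr = 0) by nra. assert (ZDi : Di = 0) by nra.
  assert (Hb : b = 0).
  { destruct (Req_dec b 0) as [|Hb]; auto. exfalso.
    assert (p - a + (s - a) = 0).
    { unfold Di in ZDi. apply (Rmult_eq_reg_l (- b)); [lra|]. intro. apply Hb. lra. }
    unfold Dr in ZDr. assert (s - a = - (p - a)) by lra. rewrite H4 in ZDr.
    assert (0 < b * b) by (apply Rsqr_pos_lt; auto). assert (HH := Rle_0_sqr (p - a)). unfold Rsqr in HH. lra. }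
  split; auto. unfold Dr in ZDr. rewrite Hb in ZDr. lra.
Qed.

Lemma root_bound (a t D : R) : a * a - t * a + D = 0 -> 1 - t + D > 0 -> 1 + t + D > 0 ->
  -2 < t < 2 -> -1 < a < 1.
Proof.
  intros E H1 H2 Ht. split.
  - destruct (Rlt_or_le (-1) a) as [|Ha]; auto. exfalso.
    assert ((a + 1) * (a - 1 - t) >= 0) by nra. nra.
  - destruct (Rlt_or_le a 1) as [|Ha]; auto. exfalso.
    assert ((a - 1) * (a + 1 - t) >= 0) by nra. nra.
Qed.

Lemma eig_final (S s0 r0 al be a b : R) : 0 < S -> S = 1 - al * be -> 0 < s0 < 1 -> 0 < r0 < 1 ->
  0 < al -> 0 < be -> 4 * S - 2 * (s0 + r0) + s0 * r0 > 0 ->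
  is_eigenvalue (Mat2 (s0 / (2 * S)) (al * r0 / (2 * S)) (be * s0 / (2 * S)) (r0 / (2 * S))) a b ->
  sqrt (a * a + b * b) < 1.
Proof.
  intros HS ES Hs Hr Hal Hbe Hc Heig.
  apply eig_real in Heig; simpl in Heig.
  2: { simpl. apply Rmult_lt_0_compat; apply Rdiv_lt_0_compat; pos. }
  destruct Heig as [Hb Ea]. subst b.
  set (t := s0 / (2 * S) + r0 / (2 * S)) in Ea.
  set (D := s0 / (2 * S) * (r0 / (2 * S)) - al * r0 / (2 * S) * (be * s0 / (2 * S))) in Ea.
  assert (Et : t = (s0 + r0) / (2 * S)) by (unfold t; field; lra).
  assert (ED : D = s0 * r0 / (4 * S)) by (unfold D; rewrite ES; field; lra).
  assert (H1 : 1 - t + D > 0).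
  { rewrite Et, ED. replace (1 - (s0 + r0) / (2 * S) + s0 * r0 / (4 * S)) with
      ((4 * S - 2 * (s0 + r0) + s0 * r0) / (4 * S)) by (field; lra).
    apply Rdiv_lt_0_compat; lra. }
  assert (H2 : 1 + t + D > 0).
  { rewrite Et, ED. assert (0 < (s0 + r0) / (2 * S)) by (apply Rdiv_lt_0_compat; lra).
    assert (0 < s0 * r0 / (4 * S)) by (apply Rdiv_lt_0_compat; pos). lra. }
  assert (H3 : -2 < t < 2).
  { rewrite Et. split.
    - assert (0 < (s0 + r0) / (2 * S)) by (apply Rdiv_lt_0_compat; lra). lra.
    - apply Rmult_lt_reg_r with (2 * S); [lra|]. unfold Rdiv. rewrite Rmult_assoc, Rinv_l by lra.
      assert (s0 * r0 < s0) by nra. nra. }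
  assert (Hab := root_bound a t D Ea H1 H2 H3).
  replace (a * a + 0 * 0) with (Rsqr a) by (unfold Rsqr; ring).
  rewrite sqrt_Rsqr_abs. apply abs_lt_iff. lra.
Qed.

Definition J0 := Mat2 0 0 0 0.

Lemma eig_zero (a b : R) : is_eigenvalue J0 a b -> sqrt (a * a + b * b) < 1.
Proof.
  intros (v1r & v1i & v2r & v2i & Hnz & E1 & E2 & E3 & E4). simpl in *.
  assert (a * a + b * b = 0).
  { destruct Hnz as [N|[N|[N|N]]].
    - apply (Rmult_eq_reg_r v1r); auto. nra.
    - apply (Rmult_eq_reg_r v1i); auto. nra.
    - apply (Rmult_eq_reg_r v2r); auto. nra.
    - apply (Rmult_eq_reg_r v2i); auto. nra. }
  rewrite H, sqrt_0. lra.
Qed.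

Lemma n2_ge1 (x y : R) : Rabs x <= norm2 x y.
Proof. unfold norm2. rewrite <- sqrt_Rsqr_abs. apply sqrt_le_1_alt. unfold Rsqr. nra. Qed.
Lemma n2_ge2 (x y : R) : Rabs y <= norm2 x y.
Proof. unfold norm2. rewrite <- sqrt_Rsqr_abs. apply sqrt_le_1_alt. unfold Rsqr. nra. Qed.
Lemma n2_le (x y : R) : norm2 x y <= Rabs x + Rabs y.
Proof.
  unfold norm2. assert (H1 := Rabs_pos x). assert (H2 := Rabs_pos y).
  rewrite <- (sqrt_Rsqr (Rabs x + Rabs y)) by lra. apply sqrt_le_1_alt.
  unfold Rsqr. assert (x * x = Rabs x * Rabs x) by (rewrite <- Rabs_mult; rewrite Rabs_pos_eq; nra).
  assert (y * y = Rabs y * Rabs y) by (rewrite <- Rabs_mult; rewrite Rabs_pos_eq; nra). nra.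
Qed.
Lemma n2_pos (x y : R) : 0 <= norm2 x y.
Proof. apply sqrt_pos. Qed.

Lemma theta_sol (B k u v tL tR : R) : theta_system B k u v tL tR ->
  sol (B * sqrt k) (B / sqrt k) u v tL tR.
Proof. intros (H1 & H2 & H3 & H4). repeat split; auto; unfold L; lra. Qed.

Lemma KI (c u v : R) : 0 < c -> 1/2 < u < 1 -> 1/2 < v < 1 ->
  exp (- (c * (2 * v - 1))) = (1 - u) / u ->
  2 * c * u * (1 - u) * (2 * v - 1) < 2 * u - 1.
Proof.
  intros Hc Hu Hv E.
  set (z := c * (2 * v - 1)) in *.
  assert (Hz : 0 < z) by (unfold z; pos).
  assert (H := K1 z Hz). rewrite E in H.
  set (e := (1 - u) / u) in *.
  assert (He : e * u = 1 - u) by (unfold e; field; lra).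
  assert (H2 : 2 * z * e * (u * u) < (1 - e * e) * (u * u)) by (apply Rmult_lt_compat_r; nra).
  replace (2 * z * e * (u * u)) with (2 * z * (e * u) * u) in H2 by ring.
  replace ((1 - e * e) * (u * u)) with (u * u - (e * u) * (e * u)) in H2 by ring.
  rewrite He in H2. unfold z in H2. nra.
Qed.

Lemma final_ineq (c d u v s0 r0 al be : R) : 0 < c -> 0 < d -> 1/2 < u < 1 -> 1/2 < v < 1 ->
  2 * c * u * (1 - u) * (2 * v - 1) < 2 * u - 1 ->
  2 * d * v * (1 - v) * (2 * u - 1) < 2 * v - 1 ->
  s0 = (2 * u - 1) / u -> r0 = (2 * v - 1) / v -> al = c * u * (1 - s0) -> be = d * v * (1 - r0) ->
  0 < 1 - al * be /\ 4 * (1 - al * be) - 2 * (s0 + r0) + s0 * r0 > 0.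
Proof.
  intros Hc Hd Hu Hv I1 I2 Es Er Ea Eb.
  assert (Ea' : al = c * (1 - u)) by (rewrite Ea, Es; field; lra).
  assert (Eb' : be = d * (1 - v)) by (rewrite Eb, Er; field; lra).
  set (X := 2 * c * u * (1 - u)). set (Y := 2 * d * v * (1 - v)).
  set (x := 2 * u - 1). set (y := 2 * v - 1).
  assert (HX : 0 < X) by (unfold X; apply Rmult_lt_0_compat; [pos|lra]).
  assert (HY : 0 < Y) by (unfold Y; apply Rmult_lt_0_compat; [pos|lra]).
  assert (Hx : 0 < x) by (unfold x; lra). assert (Hy : 0 < y) by (unfold y; lra).
  assert (I1' : X * y < x) by (unfold X, y, x; lra).
  assert (I2' : Y * x < y) by (unfold Y, y, x; lra).
  assert (XY : X * Y < 1).
  { assert ((X * y) * (Y * x) < x * y) by (apply Rmult_le_0_lt_compat; nra).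
    assert (X * Y * (x * y) < 1 * (x * y)) by nra.
    apply Rmult_lt_reg_r in H0; [lra|nra]. }
  assert (EXY : X * Y = 4 * (u * v) * (al * be)) by (unfold X, Y; rewrite Ea', Eb'; ring).
  assert (Huv : 1 < 4 * (u * v)) by nra.
  assert (Hab : 0 <= al * be) by (rewrite Ea', Eb'; apply Rmult_le_pos; apply Rmult_le_pos; lra).
  split.
  - assert (al * be <= 4 * (u * v) * (al * be)) by nra. lra.
  - assert (E : 4 * (1 - al * be) - 2 * (s0 + r0) + s0 * r0 = (1 - X * Y) / (u * v)).
    { rewrite EXY, Es, Er. field. split; lra. }
    rewrite E. apply Rdiv_lt_0_compat; nra.
Qed.

Lemma jac2 (B k aL aR : R) : 1 <= k -> 2 < B -> 1/2 < aL < 1 -> 1/2 < aR < 1 ->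
  alpha_system B k aL aR ->
  exists J, has_jacobian (F B k) (aL, aR) J /\
    forall a b, is_eigenvalue J a b -> sqrt (a * a + b * b) < 1.
Proof.
  intros Hk HB HL HR Ha.
  assert (Hsk : 0 < sqrt k) by (apply sqrt_lt_R0; lra).
  set (c := B * sqrt k). set (d := B / sqrt k).
  assert (Hc : 0 < c) by (unfold c; pos). assert (Hd : 0 < d) by (unfold d; pos).
  set (s0 := (2 * aL - 1) / aL). set (r0 := (2 * aR - 1) / aR).
  assert (Hth := alpha_theta B k aL aR Hk ltac:(lra) HL HR Ha). fold s0 r0 in Hth.
  assert (Hsol := theta_sol _ _ _ _ _ _ Hth). fold c d in Hsol.
  set (al := c * aL * (1 - s0)). set (be := d * aR * (1 - r0)).
  destruct Ha as [A1 A2].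
  assert (I1 : 2 * c * aL * (1 - aL) * (2 * aR - 1) < 2 * aL - 1).
  { apply KI; auto. rewrite <- A1. f_equal. unfold c. ring. }
  assert (I2 : 2 * d * aR * (1 - aR) * (2 * aL - 1) < 2 * aR - 1).
  { apply KI; auto. rewrite <- A2. f_equal. unfold d. ring. }
  destruct (final_ineq c d aL aR s0 r0 al be Hc Hd HL HR I1 I2 eq_refl eq_refl eq_refl eq_refl) as [HS HQ].
  set (S := 1 - al * be) in *.
  assert (Hs0 : 0 < s0 < 1) by (unfold s0; split; [apply Rdiv_lt_0_compat; lra|];
     apply Rmult_lt_reg_r with aL; [lra|]; unfold Rdiv; rewrite Rmult_assoc, Rinv_l by lra; lra).
  assert (Hr0 : 0 < r0 < 1) by (unfold r0; split; [apply Rdiv_lt_0_compat; lra|];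
     apply Rmult_lt_reg_r with aR; [lra|]; unfold Rdiv; rewrite Rmult_assoc, Rinv_l by lra; lra).
  assert (Hal : 0 < al) by (unfold al; apply Rmult_lt_0_compat; [pos|lra]).
  assert (Hbe : 0 < be) by (unfold be; apply Rmult_lt_0_compat; [pos|lra]).
  exists (Mat2 (s0 / (2 * S)) (al * r0 / (2 * S)) (be * s0 / (2 * S)) (r0 / (2 * S))).
  split.
  2: { intros a b. apply eig_final with (al := al) (be := be); auto. }
  intros eps Heps.
  destruct (deriv_sol c d aL aR s0 r0 al be Hc Hd HL HR Hsol eq_refl eq_refl HS eps Heps) as [dl [Hdl Hder]].
  exists (Rmin dl (Rmin (aL - 1/2) (aR - 1/2))).
  assert (Hm1 := Rmin_l dl (Rmin (aL - 1/2) (aR - 1/2))).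
  assert (Hm2 := Rmin_r dl (Rmin (aL - 1/2) (aR - 1/2))).
  assert (Hm3 := Rmin_l (aL - 1/2) (aR - 1/2)).
  assert (Hm4 := Rmin_r (aL - 1/2) (aR - 1/2)).
  set (de := Rmin dl (Rmin (aL - 1/2) (aR - 1/2))) in *.
  split. { unfold de. apply Rmin_glb_lt; [lra| apply Rmin_glb_lt; lra]. }
  intros h1 h2 Hn. cbv zeta. simpl fst. simpl snd.
  assert (Hh1 := n2_ge1 h1 h2). assert (Hh2 := n2_ge2 h1 h2).
  assert (B1 : - dl <= h1 <= dl) by (apply abs_le_iff; lra).
  assert (B2 : - dl <= h2 <= dl) by (apply abs_le_iff; lra).
  assert (B3 : - (aL - 1/2) < h1 < aL - 1/2) by (apply abs_lt_iff; lra).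
  assert (B4 : - (aR - 1/2) < h2 < aR - 1/2) by (apply abs_lt_iff; lra).
  assert (HBB : B * B * ((aL + h1) * (aR + h2)) > 1).
  { assert (1/4 < (aL + h1) * (aR + h2)) by nra. nra. }
  assert (Hsp := theta_spec B k (aL + h1) (aR + h2) Hk ltac:(lra) ltac:(lra) ltac:(lra) HBB).
  destruct (theta B k (aL + h1) (aR + h2)) as [tL tR] eqn:Eth. simpl in Hsp.
  assert (HBB0 : B * B * (aL * aR) > 1).
  { assert (4 < B * B) by nra. assert (1/4 < aL * aR) by nra.
    assert (4 * (1/4) < B * B * (aL * aR)) by (apply Rmult_le_0_lt_compat; lra). lra. }
  rewrite (theta_eq B k aL aR s0 r0 Hk ltac:(lra) ltac:(lra) ltac:(lra) HBB0 Hth).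
  simpl.
  specialize (Hder h1 h2 tL tR B1 B2 (theta_sol _ _ _ _ _ _ Hsp)). fold S in Hder.
  set (X1 := (aL + h1) * tL - aL * s0 - (s0 * h1 + al * r0 * h2) / S) in *.
  set (X2 := (aR + h2) * tR - aR * r0 - (be * s0 * h1 + r0 * h2) / S) in *.
  replace ((1 + tL * (aL + h1)) / 2 - (1 + s0 * aL) / 2 - (s0 / (2 * S) * h1 + al * r0 / (2 * S) * h2))
    with (X1 / 2) by (unfold X1; field; lra).
  replace ((1 + tR * (aR + h2)) / 2 - (1 + r0 * aR) / 2 - (be * s0 / (2 * S) * h1 + r0 / (2 * S) * h2))
    with (X2 / 2) by (unfold X2; field; lra).
  eapply Rle_trans. apply n2_le.
  unfold Rdiv. rewrite !Rabs_mult. rewrite (Rabs_pos_eq (/ 2)) by lra.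
  assert (Hs := n2_le h1 h2). 
  assert (Rabs h1 + Rabs h2 <= 2 * norm2 h1 h2) by lra.
  assert (eps * (Rabs h1 + Rabs h2) <= eps * (2 * norm2 h1 h2)) by (apply Rmult_le_compat_l; lra).
  replace (Rabs X1 * / 2 + Rabs X2 * / 2) with ((Rabs X1 + Rabs X2) / 2) by field.
  lra.
Qed.

Lemma sqrt_quarter : sqrt (1/2 * (1/2)) = 1/2.
Proof. apply sqrt_square. lra. Qed.

Lemma jac1 (B k : R) : 0 < B -> B < 2 -> has_jacobian (F B k) (1/2, 1/2) J0.
Proof.
  intros HB HB2 eps Heps.
  exists ((2 - B) / (2 * B)). split; [pos|].
  intros h1 h2 Hn. cbv zeta. change (fst (1/2, 1/2)) with (1/2). change (snd (1/2, 1/2)) with (1/2).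
  assert (Hh1 := n2_ge1 h1 h2). assert (Hh2 := n2_ge2 h1 h2).
  assert (HdB : 1/2 + (2 - B) / (2 * B) = 1 / B) by (field; lra).
  assert (Hu : Rabs (1/2 + h1) < 1 / B).
  { eapply Rle_lt_trans. apply Rabs_triang. rewrite Rabs_pos_eq by lra. lra. }
  assert (Hv : Rabs (1/2 + h2) < 1 / B).
  { eapply Rle_lt_trans. apply Rabs_triang. rewrite Rabs_pos_eq by lra. lra. }
  assert (Hle : sqrt ((1/2 + h1) * (1/2 + h2)) * B <= 1).
  { assert ((1/2 + h1) * (1/2 + h2) <= (1/B) * (1/B)).
    { eapply Rle_trans. apply Rle_abs. rewrite Rabs_mult.
      apply Rmult_le_compat; try apply Rabs_pos; lra. }
    assert (sqrt ((1/2 + h1) * (1/2 + h2)) <= 1 / B).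
    { rewrite <- (sqrt_square (1/B)) by (left; pos). apply sqrt_le_1_alt. auto. }
    apply Rmult_le_reg_r with (/ B). pos.
    replace (sqrt ((1 / 2 + h1) * (1 / 2 + h2)) * B * / B) with (sqrt ((1 / 2 + h1) * (1 / 2 + h2))) by (field; lra).
    lra. }
  assert (Hle0 : sqrt (1/2 * (1/2)) * B <= 1) by (rewrite sqrt_quarter; lra).
  rewrite (F_low B k _ _ Hle), (F_low B k _ _ Hle0). simpl.
  replace (1 / 2 - 1 / 2 - (0 * h1 + 0 * h2)) with 0 by ring.
  unfold norm2 at 1. replace (0 * 0 + 0 * 0) with 0 by ring. rewrite sqrt_0.
  assert (H := n2_pos h1 h2). nra.
Qed.

Theorem lemma9 (k B : R) (hk : 1 <= k) (hB : 0 < B) :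
  (B < 2 ->
     (forall a, is_fixed_point B k a <-> a = (1/2, 1/2)) /\
     jacobian_attractive B k (1/2, 1/2)) /\
  (2 < B ->
     exists aL aR,
       (1/2 < aL < 1 /\ 1/2 < aR < 1 /\ alpha_system B k aL aR) /\
       (forall bL bR, 1/2 < bL < 1 -> 1/2 < bR < 1 -> alpha_system B k bL bR ->
          bL = aL /\ bR = aR) /\
       (forall a, is_fixed_point B k a <-> a = (aL, aR)) /\
       jacobian_attractive B k (aL, aR)).
Proof.
  assert (Hsk : 0 < sqrt k) by (apply sqrt_lt_R0; lra).
  assert (Hc : 0 < B * sqrt k) by pos. assert (Hd : 0 < B / sqrt k) by pos.
  assert (Hcd : B * sqrt k * (B / sqrt k) = B * B) by (field; lra).
  split.
  - intros HB2.
    assert (Hfix : is_fixed_point B k (1/2, 1/2)).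
    { split. split; simpl; lra.
      apply F_low. rewrite sqrt_quarter. lra. }
    split.
    + intros [u v]. split.
      * intros [Hsq HF].
        destruct (Rle_dec (sqrt (u * v) * B) 1) as [Hle|Hgt].
        -- rewrite F_low in HF by auto. congruence.
        -- destruct (fixed_alpha B k u v hk hB Hsq HF Hgt) as (Hu & Hv & Ha).
           destruct (alpha_Th B k u v hk hB Hu Hv Ha) as [T1 T2].
           exfalso. apply (Th_sys_none (B * sqrt k) (B / sqrt k) (2 * u - 1) (2 * v - 1)); auto; try lra.
           nra.
      * intros E. rewrite E. exact Hfix.
    + split; auto. exists J0. split.
      * apply jac1; auto.
      * apply eig_zero.
  - intros HB2.
    destruct (Th_sys_exists (B * sqrt k) (B / sqrt k) Hc Hd ltac:(nra)) as (x & y & Hx & Hy & Ex & Ey).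
    set (aL := (1 + x) / 2). set (aR := (1 + y) / 2).
    assert (HaL : 1/2 < aL < 1) by (unfold aL; lra).
    assert (HaR : 1/2 < aR < 1) by (unfold aR; lra).
    assert (Ha : alpha_system B k aL aR).
    { split.
      - replace (B * sqrt k * (1 - 2 * aR)) with (- (B * sqrt k * y)) by (unfold aR; field).
        rewrite (Th_inv _ x (eq_sym Ex)). unfold aL. field. lra.
      - replace (B / sqrt k * (1 - 2 * aL)) with (- (B / sqrt k * x)) by (unfold aL; field; lra).
        rewrite (Th_inv _ y (eq_sym Ey)). unfold aR. field. lra. }
    assert (HBB : B * B * (aL * aR) > 1).
    { assert (4 < B * B) by nra. assert (1/4 < aL * aR) by nra.
      assert (4 * (1/4) < B * B * (aL * aR)) by (apply Rmult_le_0_lt_compat; lra). lra. }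
    assert (Huniq : forall bL bR, 1/2 < bL < 1 -> 1/2 < bR < 1 -> alpha_system B k bL bR ->
          bL = aL /\ bR = aR).
    { intros bL bR HbL HbR Hb.
      destruct (alpha_Th B k bL bR hk hB HbL HbR Hb) as [T1 T2].
      destruct (Th_sys_unique (B * sqrt k) (B / sqrt k) (2 * bL - 1) (2 * bR - 1) x y Hc Hd
        ltac:(lra) ltac:(lra) ltac:(lra) ltac:(lra) T1 T2 Ex Ey) as [U1 U2].
      unfold aL, aR. split; lra. }
    exists aL, aR. split; [auto|]. split; [auto|].
    assert (Hfix : is_fixed_point B k (aL, aR)) by (apply alpha_fixed; auto; lra).
    split.
    + intros [u v]. split.
      * intros [Hsq HF].
        destruct (Rle_dec (sqrt (u * v) * B) 1) as [Hle|Hgt].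
        -- rewrite F_low in HF by auto. injection HF as E1 E2. subst u v.
           rewrite sqrt_quarter in Hle. lra.
        -- destruct (fixed_alpha B k u v hk hB Hsq HF Hgt) as (Hu & Hv & Hb).
           destruct (Huniq u v Hu Hv Hb). subst. reflexivity.
      * intros E. rewrite E. exact Hfix.
    + split; auto. apply jac2; auto.
Qed.
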